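(* Let $k$ be a positive integer and let $D$ be a digraph of order $n$ with no isolated vertex such that $\Delta^-(D)\ge\Delta^+(D)\ge1$. If $k>(\Delta^-(D))^2$, then $\gamma_{trk}(D)=n$.
   Context: All digraphs are finite, with no loops or multiple arcs (pairs of opposite arcs are allowed). $N^-(v)$ denotes the set of in-neighbors of $v$; $\Delta^+(D)$ and $\Delta^-(D)$ are the maximum out-degree and maximum in-degree of $D$. A vertex is isolated if it has no in-neighbor and no out-neighbor. For a positive integer $k$, a $k$-rainbow dominating function ($k$RDF) on $D$ is a function $f:V(D)\to\mathcal P(\{1,\dots,k\})$ such that every $v$ with $f(v)=\emptyset$ satisfies $\bigcup_{u\in N^-(v)}f(u)=\{1,\dots,k\}$; its weight is $\omega(f)=\sum_v|f(v)|$. If $D$ has no isolated vertex, a total $k$RDF (T$k$RDF) is a $k$RDF $f$ such that the subdigraph induced by $\{v:f(v)\ne\emptyset\}$ has no isolated vertex; $\gamma_{trk}(D)$ is the minimum weight of a T$k$RDF. *)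

(* Defs.v *)
(* A digraph is a finite vertex type V with an arc relation
   A : rel V (A u v = there is an arc u -> v), required to be irreflexive
   (no loops); opposite arcs are allowed; no multiple arcs by construction. *)
From mathcomp Require Import all_boot.
Set Implicit Arguments. Unset Strict Implicit. Unset Printing Implicit Defensive.

Section Digraph.
Variables (V : finType) (A : rel V).

Definition in_nbhd (v : V) : {set V} := [set u | A u v].
Definition out_nbhd (v : V) : {set V} := [set w | A v w].

Definition indeg (v : V) : nat := #|in_nbhd v|.
Definition outdeg (v : V) : nat := #|out_nbhd v|.

Definition max_outdeg : nat := \max_(v : V) outdeg v.
Definition max_indeg : nat := \max_(v : V) indeg v.

Definition isolated (v : V) : bool := (in_nbhd v == set0) && (out_nbhd v == set0).
Definition no_isolated : bool := [forall v, ~~ isolated v].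

(* k-rainbow dominating functions, colours {1..k} encoded as 'I_k *)
Definition is_kRDF (k : nat) (f : {ffun V -> {set 'I_k}}) : bool :=
  [forall v, (f v == set0) ==> (\bigcup_(u in in_nbhd v) f u == [set: 'I_k])].

Definition weight (k : nat) (f : {ffun V -> {set 'I_k}}) : nat :=
  \sum_(v : V) #|f v|.

(* the subdigraph induced by {v : f v <> empty} has no isolated vertex *)
Definition is_TkRDF (k : nat) (f : {ffun V -> {set 'I_k}}) : bool :=
  is_kRDF f &&
  [forall v, (f v != set0) ==>
     [exists u, (f u != set0) && (A u v || A v u)]].

(* When D has no isolated vertex,
   the function v |-> {1..k} is a TkRDF of weight k * #|V|, so the default
   value of the min below is attained and this is the true minimum. *)
Definition gamma_trk (k : nat) : nat :=
  \big[minn/(k * #|V|)]_(f : {ffun V -> {set 'I_k}} | is_TkRDF f) weight f.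

End Digraph.

(* Main.v *)
Require Import Defs.
From mathcomp Require Import all_boot.
From mathcomp Require Import zify.

Lemma card_bigcup_le (V : finType) k (P : {set V}) (F : V -> {set 'I_k}) :
  #|\bigcup_(u in P) F u| <= \sum_(u in P) #|F u|.
Proof.
apply: (big_ind2 (fun (S : {set 'I_k}) n => #|S| <= n)).
- by rewrite cards0.
- move=> S1 n1 S2 n2 H1 H2; apply: leq_trans (leq_card_setU S1 S2) _.
  exact: leq_add.
- by [].
Qed.

Lemma bigmin_le (I : finType) (P : pred I) (F : I -> nat) x i0 :
  P i0 -> \big[minn/x]_(i | P i) F i <= F i0.
Proof.
move=> Pi0; rewrite unlock.
have : i0 \in index_enum I by rewrite mem_index_enum.
elim: (index_enum I) => //= a s IH; rewrite inE => /orP[/eqP <-|hs].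
  by rewrite /= Pi0 geq_minl.
case: (P a) => /=; last exact: IH.
by apply: leq_trans (geq_minr _ _) (IH hs).
Qed.

Theorem corollary3p3 (V : finType) (A : rel V) (k : nat) :
  irreflexive A ->
  0 < k ->
  no_isolated A ->
  1 <= max_outdeg A <= max_indeg A ->
  (max_indeg A) ^ 2 < k ->
  gamma_trk A k = #|V|.
Proof.
move=> irrA k0 noiso /andP[dp1 dpm] hk.
set dm := max_indeg A in dpm hk; set dp := max_outdeg A in dp1 dpm.
have kge : dm + dp <= k by nia.
have low : forall f : {ffun V -> {set 'I_k}}, is_kRDF A f -> #|V| <= weight f.
  move=> f /forallP fR.
  pose g u := (#|f u| - 1)%N.
  pose V0 := [set v | f v == set0].
  have hv : forall v, v \in V0 -> k - dm <= \sum_(u in in_nbhd A v) g u.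
    move=> v; rewrite inE => /eqP f0.
    have := fR v; rewrite f0 eqxx /= => /eqP hU.
    have h1 := @card_bigcup_le V k (in_nbhd A v) f.
    rewrite hU cardsT card_ord in h1.
    have h2 : \sum_(u in in_nbhd A v) #|f u| <=
              \sum_(u in in_nbhd A v) g u + \sum_(u in in_nbhd A v) 1.
      rewrite -big_split /=; apply: leq_sum => u _; rewrite /g; by case: #|f u| => // n; rewrite subSS subn0 addn1.
    have h3 : \sum_(u in in_nbhd A v) 1 <= dm.
      rewrite sum1_card /dm /max_indeg; apply: (leq_trans _ (@leq_bigmax _ (indeg A) v)); by rewrite /indeg.
    lia.
  have S1 : #|V0| * (k - dm) <= \sum_(v in V0) \sum_(u in in_nbhd A v) g u.
    rewrite -sum_nat_const; exact: leq_sum.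
  have S2 : \sum_(v in V0) \sum_(u in in_nbhd A v) g u <=
            \sum_v \sum_(u in in_nbhd A v) g u.
    by rewrite [X in _ <= X](bigID (mem V0)) /= leq_addr.
  have S3 : \sum_v \sum_(u in in_nbhd A v) g u = \sum_u g u * outdeg A u.
    transitivity (\sum_v \sum_u (if A u v then g u else 0)).
      apply: eq_bigr => v _; rewrite big_mkcond /=; apply: eq_bigr => u _.
      by rewrite inE.
    rewrite exchange_big /=; apply: eq_bigr => u _.
    rewrite /outdeg -sum1_card big_distrr /= [RHS]big_mkcond /=.
    by apply: eq_bigr => v _; rewrite inE; case: (A u v); rewrite ?muln1.
  have S4 : \sum_u g u * outdeg A u <= \sum_u g u * dp.
    apply: leq_sum => u _; apply: leq_mul => //.
    rewrite /dp /max_outdeg; exact: (@leq_bigmax _ (outdeg A) u).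
  rewrite -big_distrl /= in S4.
  have hV0 : #|V0| <= \sum_u g u.
    have : #|V0| * dp <= (\sum_u g u) * dp.
      apply: leq_trans (_ : #|V0| * (k - dm) <= _); first by apply: leq_mul => //; lia.
      lia.
    by rewrite leq_pmul2r.
  have hW : \sum_u g u + #|~: V0| <= weight f.
    have -> : #|~: V0| = \sum_(u in ~: V0) 1 by rewrite sum1_card.
    rewrite /weight [X in _ + X]big_mkcond /= -big_split /=.
    apply: leq_sum => u _; rewrite /g !inE.
    case: eqP => [->|/eqP ne]; first by rewrite cards0.
    have : 0 < #|f u| by rewrite card_gt0.
    rewrite /=; lia.
  have := cardsC V0; lia.
rewrite /gamma_trk; apply/eqP; rewrite eqn_leq; apply/andP; split.
- pose f0 : {ffun V -> {set 'I_k}} := [ffun=> [set Ordinal k0]].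
  have Tf0 : is_TkRDF A f0.
    apply/andP; split.
      by apply/forallP => v; rewrite /f0 ffunE -cards_eq0 cards1.
    apply/forallP => v; apply/implyP => _.
    have := forallP noiso v; rewrite /isolated negb_and.
    case/orP => /set0Pn [u]; rewrite inE => hu; apply/existsP; exists u;
      rewrite /f0 ffunE -cards_eq0 cards1 /= hu ?orbT //.
  apply: leq_trans (@bigmin_le _ (fun f => is_TkRDF A f) (@weight V k) (k * #|V|) f0 Tf0) _.
  rewrite /weight -sum1_card; apply: eq_leq; apply: eq_bigr => v _.
  by rewrite ffunE cards1.
- apply: (big_ind (fun x => #|V| <= x)).
  + by rewrite leq_pmull.
  + by move=> x y hx hy; rewrite leq_min hx hy.
  + by move=> f /andP[hf _]; apply: low.
Qed.
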